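(* Let $0<\alpha<1$, $m>1$, and let $a=\alpha/m$, $b=B=\alpha$, $A=1-\frac{m-1}{m}\alpha$, $F(z,s)=(m+1)\big(B(1-s)+(A+B)(z-s)\big)$ and $$K(z,u)=\frac{1}{\Gamma(1-\alpha)}\int_{\left(\frac{1-z}{1-u}\right)^{1/b}}^{1} F\big(z,\,1-s^{b}(1-u)\big)\,(1-s)^{-\alpha}\,s^{a+b}\,ds,\qquad 0\le u\le z<1 .$$ Then for every $X\in(0,1)$ there exist constants $0<K_-\le K_+$ (depending on $\alpha,m,X$) such that $$K_-\,(z-u)^{1-\alpha}\le K(z,u)\le K_+\,(z-u)^{1-\alpha}\qquad\text{for all } 0\le u\le z\le X .$$
   Context: This is the kernel of the Volterra equation $y(z)^{m+1}=\int_0^z K(z,u)y(u)\,du$ to which self-similar solutions $u(x,t)=t^{a}U(xt^{-b})$ of $\partial_t^\alpha u=(u^mu_x)_x$ with the Robin condition $u^mu_x(0,t)=-u(0,t)$ reduce. *)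

(* Defs.v *)
From HB Require Import structures.
From mathcomp Require Import all_boot all_order all_algebra.
From mathcomp Require Import all_classical all_reals all_analysis.
Set Implicit Arguments. Unset Strict Implicit. Unset Printing Implicit Defensive.
Import Order.TTheory GRing.Theory Num.Theory.
Local Open Scope classical_set_scope.
Local Open Scope ring_scope.

Definition GammaR {R : realType} (x : R) : R :=
  Rintegral lebesgue_measure `[0%R, +oo[%classic
    (fun t : R => t `^ (x - 1) * expR (- t)).

Definition Fker {R : realType} (al m z s : R) : R :=
  let B := al in let A := 1 - (m - 1) / m * al in
  (m + 1) * (B * (1 - s) + (A + B) * (z - s)).

Definition Kker {R : realType} (al m z u : R) : R :=
  let a := al / m in let b := al in
  (GammaR (1 - al))^-1 *
  Rintegral lebesgue_measure `[((1 - z) / (1 - u)) `^ (1 / b), 1]%classic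
    (fun s : R => Fker al m z (1 - s `^ b * (1 - u)) * (1 - s) `^ (- al)
                  * s `^ (a + b)).

(* Main.v *)
Require Import Defs.
From HB Require Import structures.
From mathcomp Require Import all_boot all_order all_algebra.
From mathcomp Require Import all_classical all_reals all_analysis.
From mathcomp Require Import measurable_realfun.
From mathcomp Require Import zify ring lra.
Import Order.TTheory GRing.Theory Num.Theory.
Import numFieldNormedType.Exports.
Local Open Scope classical_set_scope.
Local Open Scope ring_scope.
Set Implicit Arguments. Unset Strict Implicit. Unset Printing Implicit Defensive.
Ltac show_goal := match goal with |- ?g => idtac "GOAL:" g end.

Section S.
Context {R : realType}.
Notation mu := (@lebesgue_measure R).

Lemma trunc_right (f : R -> R) (a b M : R) : a < b ->
  measurable_fun `[a, b[ f -> (forall x, a <= x < b -> 0 <= f x) ->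
  (forall x, a < x < b -> (\int[mu]_(t in `[a, x]) (f t)%:E <= M%:E)%E) ->
  (\int[mu]_(t in `[a, b]) (f t)%:E <= M%:E)%E.
Proof.
move=> ab mf f0 hM.
pose F n := `[a, b - (b - a) / n.+2%:R]%classic.
have Fsub n : F n `<=` `[a, b[%classic.
  move=> x; rewrite /F /= !in_itv /= => /andP[-> xb] /=.
  apply: (le_lt_trans xb); rewrite ltrBlDr ltrDl divr_gt0 // subr_gt0 //.
have FU : `[a, b[%classic = \bigcup_n F n.
  apply/seteqP; split; last by move=> x [n _]; apply: Fsub.
  move=> x /=; rewrite in_itv /= => /andP[ax xb].
  have [n nP] : exists n : nat, (b - a) / (b - x) < n%:R.
    exists (Num.Def.trunc ((b - a) / (b - x))).+1; exact: truncnS_gt.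
  exists n => //; rewrite /F /= in_itv /= ax /=.
  rewrite lerBrDr -lerBrDl ler_pdivrMr ?ltr0n //.
  rewrite ltr_pdivrMr ?subr_gt0 // in nP.
  apply: ltW; apply: (lt_le_trans nP); rewrite mulrC ler_wpM2l ?subr_ge0 ?ltW //.
  by rewrite ltr_nat.
have mfE : measurable_fun `[a, b[ (fun x : R => (f x)%:E) by apply/measurable_EFinP.
rewrite -integral_itv_bndo_bndc //.
have cv : (\int[mu]_(x in F i) (f x)%:E)%E @[i --> \oo] -->
    (\int[mu]_(x in \bigcup_i F i) (f x)%:E)%E.
  apply: ge0_nondecreasing_set_cvg_integral.
  - move=> m n mn; rewrite subsetEset /F => x /=; rewrite !in_itv /= => /andP[-> xm] /=.
    apply: (le_trans xm); rewrite lerD2l lerN2 ler_pM2l ?subr_gt0 //.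
    by rewrite lef_pV2 ?posrE ?ltr0n // ler_nat !ltnS.
  - by move=> n; exact: measurable_itv.
  - by move=> n; apply: measurable_funS mfE => //.
  - by move=> n x /Fsub /=; rewrite in_itv /= => /andP[ax xb]; rewrite lee_fin f0 // ax xb.
rewrite FU -(cvg_lim _ cv) //.
apply: lime_le; first by apply/cvg_ex; eexists; apply: cv.
apply: nearW => n; apply: hM.
have hd : (b - a) / n.+2%:R < b - a.
  by rewrite ltr_pdivrMr ?ltr0n // ltr_pMr ?subr_gt0 // ltr1n.
have hd0 : 0 < (b - a) / n.+2%:R by rewrite divr_gt0 ?subr_gt0 ?ltr0n.
move: hd hd0; set d := (b - a) / n.+2%:R => hd hd0.
apply/andP; split; lra.
Qed.

Lemma trunc_left (f : R -> R) (a b M : R) : a < b ->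
  measurable_fun `]a, b] f -> (forall x, a < x <= b -> 0 <= f x) ->
  (forall x, a < x < b -> (\int[mu]_(t in `[x, b]) (f t)%:E <= M%:E)%E) ->
  (\int[mu]_(t in `[a, b]) (f t)%:E <= M%:E)%E.
Proof.
move=> ab mf f0 hM.
pose F n := `[a + (b - a) / n.+2%:R, b]%classic.
have Fsub n : F n `<=` `]a, b]%classic.
  move=> x; rewrite /F /= !in_itv /= => /andP[xb ->]; rewrite andbT.
  apply: (lt_le_trans _ xb); rewrite ltrDl divr_gt0 // subr_gt0 //.
have FU : `]a, b]%classic = \bigcup_n F n.
  apply/seteqP; split; last by move=> x [n _]; apply: Fsub.
  move=> x /=; rewrite in_itv /= => /andP[ax xb].
  have [n nP] : exists n : nat, (b - a) / (x - a) < n%:R.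
    exists (Num.Def.trunc ((b - a) / (x - a))).+1; exact: truncnS_gt.
  exists n => //; rewrite /F /= in_itv /= xb andbT.
  rewrite -lerBrDl ler_pdivrMr ?ltr0n //.
  rewrite ltr_pdivrMr ?subr_gt0 // in nP.
  apply: ltW; apply: (lt_le_trans nP); rewrite mulrC ler_wpM2l ?subr_ge0 ?ltW //.
  by rewrite ltr_nat.
have mfE : measurable_fun `]a, b] (fun x : R => (f x)%:E) by apply/measurable_EFinP.
rewrite -integral_itv_obnd_cbnd //.
have cv : (\int[mu]_(x in F i) (f x)%:E)%E @[i --> \oo] -->
    (\int[mu]_(x in \bigcup_i F i) (f x)%:E)%E.
  apply: ge0_nondecreasing_set_cvg_integral.
  - move=> m n mn; rewrite subsetEset /F => x /=; rewrite !in_itv /= => /andP[xm ->]; rewrite andbT.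
    apply: (le_trans _ xm); rewrite lerD2l ler_pM2l ?subr_gt0 //.
    by rewrite lef_pV2 ?posrE ?ltr0n // ler_nat !ltnS.
  - by move=> n; exact: measurable_itv.
  - by move=> n; apply: measurable_funS mfE => //.
  - by move=> n x /Fsub /=; rewrite in_itv /= => /andP[ax xb]; rewrite lee_fin f0 // ax xb.
rewrite FU -(cvg_lim _ cv) //.
apply: lime_le; first by apply/cvg_ex; eexists; apply: cv.
apply: nearW => n; apply: hM.
have hd : (b - a) / n.+2%:R < b - a.
  by rewrite ltr_pdivrMr ?ltr0n // ltr_pMr ?subr_gt0 // ltr1n.
have hd0 : 0 < (b - a) / n.+2%:R by rewrite divr_gt0 ?subr_gt0 ?ltr0n.
move: hd hd0; set d := (b - a) / n.+2%:R => hd hd0.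
apply/andP; split; lra.
Qed.

Lemma ftc_nice (f F : R -> R) (a b : R) : a < b ->
  (forall x, a <= x <= b -> is_derive x 1 F (f x)) ->
  (forall x, a <= x <= b -> {for x, continuous (f : R -> R)}) ->
  (\int[mu]_(x in `[a, b]) (f x)%:E = (F b - F a)%:E)%E.
Proof.
move=> ab dF cf; rewrite EFinB; apply: continuous_FTC2 => //.
- apply: continuous_in_subspaceT => x; rewrite inE /= in_itv /= => xab.
  exact: cf.
- have cF x : a <= x <= b -> {for x, continuous F}.
    move=> xab; apply: differentiable_continuous; apply/derivable1_diffP.
    by have [] := dF x xab.
  split.
  + move=> x; rewrite in_itv /= => /andP[ax xb].
    have xab : a <= x <= b by rewrite (ltW ax) (ltW xb).
    by case: (dF x xab).
  + apply: cvg_at_right_filter; apply: cF; by rewrite lexx ltW.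
  + apply: cvg_at_left_filter; apply: cF; by rewrite lexx ltW.
- move=> x; rewrite in_itv /= => /andP[ax xb].
  have xab : a <= x <= b by rewrite (ltW ax) (ltW xb).
  by rewrite derive1E; case: (dF x xab).
Qed.

Lemma powR_cont (p x : R) : 0 < x -> {for x, continuous (fun t : R => t `^ p)}.
Proof.
move=> x0; apply: differentiable_continuous; apply/derivable1_diffP.
by apply: derivable_powR; rewrite in_itv /= x0.
Qed.

Lemma sing0 (al : R) : 0 < al -> al < 1 ->
  (\int[mu]_(t in `[0%R, 1%R]) (t `^ (- al))%:E <= ((1 - al)^-1)%:E)%E.
Proof.
move=> a0 a1; apply: trunc_left => //.
- by apply: measurable_funS (measurable_powR _) => //.
- by move=> x _; exact: powR_ge0.
move=> x /andP[x0 x1].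
have dF : forall t, x <= t <= 1 ->
    is_derive t 1 (fun t => (1 - al)^-1 * t `^ (1 - al)) (t `^ (- al)).
  move=> t /andP[xt _]; have t0 : 0 < t by apply: lt_le_trans xt.
  have := is_deriveZ ((1 - al)^-1) (is_derive1_powR (1 - al) t0).
  have e : (1 - al)^-1 *: ((1 - al) * t `^ (1 - al - 1)) = t `^ (- al).
    rewrite /GRing.scale /= mulrA mulVf ?mul1r; last by rewrite subr_eq0 gt_eqF.
    by congr (_ `^ _); ring.
  rewrite e; exact.
have cf : forall t, x <= t <= 1 -> {for t, continuous (fun t : R => t `^ (- al))}.
  move=> t /andP[xt _]; apply: powR_cont; exact: lt_le_trans xt.
rewrite (ftc_nice x1 dF cf).
rewrite lee_fin powR1 mulr1 lerBlDr lerDl mulr_ge0 // ?powR_ge0 //.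
by rewrite invr_ge0 subr_ge0 ltW.
Qed.

Lemma sing1 (al c : R) : 0 < al -> al < 1 -> c < 1 ->
  (\int[mu]_(s in `[c, 1%R]) ((1 - s) `^ (- al))%:E <=
     ((1 - al)^-1 * (1 - c) `^ (1 - al))%:E)%E.
Proof.
move=> a0 a1 c1; apply: trunc_right => //.
- apply: (measurable_funS (E := setT)) => //.
  apply: measurableT_comp (measurable_powR _) _.
  by apply: measurable_funB.
- by move=> x _; exact: powR_ge0.
move=> x /andP[cx x1].
have dF : forall t, c <= t <= x ->
    is_derive t 1 (fun t => - ((1 - al)^-1 * (1 - t) `^ (1 - al))) ((1 - t) `^ (- al)).
  move=> t /andP[_ tx]; have t0 : 0 < 1 - t by rewrite subr_gt0; apply: le_lt_trans x1.
  have hg : is_derive t 1 (fun s : R => 1 - s) (0 - 1).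
    by apply: is_deriveB.
  have h1 := is_derive1_powR (1 - al) t0.
  have h := is_deriveZ (- (1 - al)^-1) (@is_derive1_comp R (@powR R ^~ (1 - al)) (fun s => 1 - s) t _ _ h1 hg).
  have e : (- (1 - al)^-1) *: ((1 - al) * (1 - t) `^ (1 - al - 1) * (0 - 1)) = (1 - t) `^ (- al).
    rewrite /GRing.scale /= sub0r mulrN1 mulrN mulNr opprK mulrA mulVf ?mul1r; last by rewrite subr_eq0 gt_eqF.
    by congr (_ `^ _); ring.
  move: h; rewrite e => h.
  have -> : (fun t0 : R => - ((1 - al)^-1 * (1 - t0) `^ (1 - al))) = (- (1 - al)^-1) \*: (@powR R ^~ (1 - al) \o (fun s => 1 - s)).
    by apply/funext => y /=; rewrite /GRing.scale /= mulNr.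
  exact: h.
have cf : forall t, c <= t <= x -> {for t, continuous (fun t : R => (1 - t) `^ (- al))}.
  move=> t /andP[_ tx]; have t0 : 0 < 1 - t by rewrite subr_gt0; apply: le_lt_trans x1.
  change {for t, continuous ((fun y : R => y `^ (- al)) \o (fun s : R => 1 - s))}.
  apply: continuous_comp; last exact: powR_cont.
  by apply: continuousB => //; exact: cvg_cst.
rewrite (ftc_nice cx dF cf).
rewrite lee_fin.
have : 0 <= (1 - al)^-1 * (1 - x) `^ (1 - al).
  by rewrite mulr_ge0 ?powR_ge0 // invr_ge0 subr_ge0 ltW.
lra.
Qed.

Lemma powRN_ge1 (t al : R) : 0 < t -> t <= 1 -> 0 <= al -> 1 <= t `^ (- al).
Proof.
move=> t0 t1 a0; rewrite powRN invf_ge1 ?powR_gt0 //.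
have := @ge0_ler_powR R al a0 t 1; rewrite !nnegrE powR1 => -> //; exact: ltW.
Qed.

Lemma powRN_le1 (t al : R) : 1 <= t -> 0 <= al -> t `^ (- al) <= 1.
Proof.
move=> t1 a0; have t0 : 0 < t by apply: lt_le_trans t1.
rewrite powRN invf_le1 ?powR_gt0 //.
have := @ge0_ler_powR R al a0 1 t; rewrite !nnegrE powR1 => -> //; exact: ltW.
Qed.

Lemma gamma_int_bounds (al : R) : 0 < al -> al < 1 ->
  ((expR (-1))%:E <= \int[mu]_(t in `[0%R, +oo[) (t `^ (1 - al - 1) * expR (- t))%:E)%E /\
  (\int[mu]_(t in `[0%R, +oo[) (t `^ (1 - al - 1) * expR (- t))%:E <= ((1 - al)^-1 + 1)%:E)%E.
Proof.
move=> a0 a1.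
have ea : 1 - al - 1 = - al by ring.
rewrite ea.
set h := fun t : R => t `^ (- al) * expR (- t).
have mh : measurable_fun setT h.
  apply: measurable_funM; first exact: measurable_powR.
  by apply: measurableT_comp; [exact: measurable_expR | ].
have h0 t : 0 <= h t by rewrite mulr_ge0 ?powR_ge0 ?expR_ge0.
have mhE : measurable_fun setT (fun t => (h t)%:E) by apply/measurable_EFinP.
split.
  apply: (@le_trans _ _ (\int[mu]_(t in `]0%R, 1%R]) (h t)%:E)%E); last first.
    apply: ge0_subset_integral => //.
    - exact: measurable_funTS.
    - by move=> t _; rewrite lee_fin.
    - by move=> t /=; rewrite !in_itv /= => /andP[/ltW -> _].
  apply: (@le_trans _ _ (\int[mu]_(t in `]0%R, 1%R]) (cst (expR (-1))%:E) t)%E).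
    rewrite integral_cst //.
    have H := @lebesgue_measure_itv R `]0%R, 1%R].
    rewrite /= lte_fin ltr01 sube0 in H.
    set mm := (X in (_ * X)%E).
    have -> : mm = 1%E by exact: H.
    by rewrite mule1.
  apply: ge0_le_integral => //.
  - by move=> t _; rewrite /= lee_fin expR_ge0.
  - exact: measurable_funTS.
  move=> t /=; rewrite in_itv /= => /andP[t0 t1]; rewrite lee_fin /h.
  rewrite -[X in X <= _]mul1r; apply: ler_pM; rewrite ?expR_ge0 //.
  - exact: powRN_ge1 (ltW a0).
  - by rewrite ler_expR lerN2.
pose G1 : R -> \bar R := (fun t : R => (t `^ (- al))%:E) \_ `[0%R, 1%R].
apply: (@le_trans _ _ (\int[mu]_(t in `[0%R, +oo[) (G1 t + (expR (- t))%:E))%E).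
  apply: ge0_le_integral => //.
  - by move=> t _; rewrite lee_fin; exact: h0.
  - by apply: measurable_funTS; exact: mhE.
  - apply: measurable_funTS; apply: emeasurable_funD.
    + apply/(measurable_restrictT _ _).1 => //.
      by apply: measurable_funTS; apply/measurable_EFinP; exact: measurable_powR.
    + by apply/measurable_EFinP; apply: measurableT_comp; [exact: measurable_expR|].
  move=> t /=; rewrite in_itv /= andbT => t0; rewrite /G1 patchE.
  have [t1|t1] := leP t 1.
  + rewrite mem_set /=; last by rewrite in_itv /= t0 t1.
    rewrite -EFinD lee_fin.
    apply: (@le_trans _ _ (t `^ (- al))).
      by rewrite -[leRHS]mulr1 ler_pM ?powR_ge0 ?expR_ge0 // expR_le1 oppr_le0.
    by rewrite lerDl expR_ge0.
  + rewrite memNset /=; last by rewrite in_itv /= t0 /= leNgt t1.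
    rewrite add0e lee_fin.
    by rewrite -[leRHS]mul1r ler_pM ?powR_ge0 ?expR_ge0 // powRN_le1 // ?ltW.
have G10 : forall t : R, (`[0%R, +oo[%classic : set R) t -> (0 <= G1 t)%E.
  by move=> t _; rewrite /G1 patchE; case: ifPn => // _; rewrite lee_fin powR_ge0.
have mG1 : measurable_fun (`[0%R, +oo[%classic : set R) G1.
  apply: measurable_funTS; apply/(measurable_restrictT _ _).1 => //.
  by apply: measurable_funTS; apply/measurable_EFinP; exact: measurable_powR.
have e0 : forall t : R, (`[0%R, +oo[%classic : set R) t -> (0 <= (expR (- t))%:E)%E.
  by move=> t _; rewrite lee_fin expR_ge0.
have me : measurable_fun (`[0%R, +oo[%classic : set R) (fun t : R => (expR (- t))%:E).
  by apply/measurable_EFinP; apply: measurableT_comp; [exact: measurable_expR|].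
rewrite ge0_integralD //.
rewrite EFinD; apply: leeD.
  rewrite /G1 -integral_mkcondr setIidr; last first.
    by move=> t /=; rewrite !in_itv /= => /andP[-> _].
  exact: sing0.
have e1 := @integral_exponential_pdf R 1 ltr01.
rewrite -e1.
apply: (@le_trans _ _ (\int[mu]_(t in `[0%R, +oo[) (exponential_pdf 1 t)%:E)%E).
  rewrite (_ : \int[mu]_(t in `[0%R, +oo[) (expR (- t))%:E = \int[mu]_(t in `[0%R, +oo[) (exponential_pdf 1 t)%:E)%E //.
  apply: eq_integral => t; rewrite inE /= in_itv /= andbT => t0.
  by rewrite exponential_pdfE // mul1r mulN1r.
apply: ge0_subset_integral => //.
- apply/measurable_EFinP; exact: measurable_exponential_pdf.
- by move=> t _; rewrite lee_fin exponential_pdf_ge0.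
Qed.

Lemma ln_ge (r : R) : 0 < r -> 1 - r^-1 <= ln r.
Proof.
move=> r0; have := expR_ge1Dx (ln r^-1).
rewrite lnK ?posrE ?invr_gt0 // lnV ?posrE //; lra.
Qed.

Lemma delta_bounds (al X z u : R) : 0 < al -> al < 1 -> X < 1 ->
  0 <= u -> u <= z -> z <= X ->
  [/\ z - u <= 1 - ((1 - z) / (1 - u)) `^ (1 / al),
      1 - ((1 - z) / (1 - u)) `^ (1 / al) <= (z - u) / (al * (1 - X)),
      (1 - X) `^ (1 / al) <= ((1 - z) / (1 - u)) `^ (1 / al) &
      ((1 - z) / (1 - u)) `^ (1 / al) <= 1].
Proof.
move=> a0 a1 X1 u0 uz zX.
have z1 : 0 < 1 - z by lra.
have u1 : 0 < 1 - u by lra.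
set r := (1 - z) / (1 - u).
have r0 : 0 < r by rewrite divr_gt0.
have r1 : r <= 1 by rewrite ler_pdivrMr // mul1r; lra.
have rX : 1 - X <= r.
  rewrite ler_pdivlMr //; apply: (@le_trans _ _ (1 - X)).
    by rewrite ger_pMr; lra.
  lra.
have q1 : 1 <= 1 / al by rewrite ler_pdivlMr // mul1r ltW.
have cr : r `^ (1 / al) <= r by apply: ge1r_powR; rewrite ?r0.
have rr : 1 - r = (z - u) / (1 - u) by rewrite /r; field; lra.
split.
- apply: (@le_trans _ _ (1 - r)); last lra.
  rewrite rr ler_pdivlMr //; nra.
- rewrite /powR gt_eqF //.
  have e1 := expR_ge1Dx (1 / al * ln r).
  have lr := ln_ge r0.
  have : 1 - r^-1 = - ((z - u) / (1 - z)) by rewrite /r; field; lra.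
  move=> e2; rewrite e2 in lr.
  have : 1 / al * - ((z - u) / (1 - z)) <= 1 / al * ln r.
    by rewrite ler_pM2l // divr_gt0.
  have : (z - u) / (1 - z) <= (z - u) / (1 - X).
    apply: ler_wpM2l; first lra.
    rewrite lef_pV2 ?posrE; lra.
  have -> : (z - u) / (al * (1 - X)) = 1 / al * ((z - u) / (1 - X)).
    by field; rewrite !gt_eqF ?subr_gt0.
  move=> h1 h2.
  have : 1 / al * ((z - u) / (1 - z)) <= 1 / al * ((z - u) / (1 - X)).
    by rewrite ler_pM2l // divr_gt0.
  rewrite mulrN in h2.
  lra.
- by apply: ge0_ler_powR; rewrite ?nnegrE ?divr_ge0 //; lra.
- exact: le_trans cr r1.
Qed.

Lemma Fker_bounds (al m X z u s : R) : 0 < al -> al < 1 -> 1 < m -> X < 1 ->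
  0 <= u -> u <= z -> z <= X ->
  ((1 - z) / (1 - u)) `^ (1 / al) <= s -> s <= 1 ->
  (m + 1) * al * (1 - X) <= Fker al m z (1 - s `^ al * (1 - u)) /\
  Fker al m z (1 - s `^ al * (1 - u)) <= (m + 1) * (al + (1 - (m - 1) / m * al + al)).
Proof.
move=> a0 a1 m1 X1 u0 uz zX cs s1.
have z1 : 0 < 1 - z by lra.
have u1 : 0 < 1 - u by lra.
set r := (1 - z) / (1 - u).
have r0 : 0 < r by rewrite divr_gt0.
have c0 : 0 <= r `^ (1 / al) by apply: powR_ge0.
have s0 : 0 <= s by apply: le_trans cs.
have ca : (r `^ (1 / al)) `^ al = r.
  by rewrite -powRrM mul1r mulVf ?gt_eqF // powRr1 // ltW.
have sa : r <= s `^ al.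
  rewrite -ca; apply: ge0_ler_powR; rewrite ?nnegrE //; exact: ltW.
have sa1 : s `^ al <= 1.
  have := @ge0_ler_powR R al (ltW a0) s 1; rewrite !nnegrE powR1 => -> //.
set w := s `^ al * (1 - u).
have wl : 1 - z <= w.
  rewrite /w; have -> : 1 - z = r * (1 - u) by rewrite /r; field; rewrite gt_eqF.
  by rewrite ler_pM2r.
have wh : w <= 1 - u.
  by rewrite /w -[leRHS]mul1r ler_pM2r.
have mq : 0 <= (m - 1) / m <= 1.
  rewrite divr_ge0 /=; try lra.
  by rewrite ler_pdivrMr ?mul1r; lra.
set AB := 1 - (m - 1) / m * al + al.
have AB1 : 1 <= AB.
  rewrite /AB; have : (m - 1) / m * al <= al.
    rewrite -[leRHS]mul1r; apply: ler_wpM2r; [exact: ltW | by case/andP: mq].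
  lra.
rewrite /Fker /=.
rewrite -/AB.
have e1 : 1 - (1 - w) = w by ring.
have e2 : z - (1 - w) = w - (1 - z) by ring.
rewrite e1 e2.
have m0 : 0 < m + 1 by lra.
split.
- rewrite -mulrA ler_pM2l //.
  have : al * (1 - X) <= al * w by rewrite ler_pM2l //; lra.
  have : 0 <= AB * (w - (1 - z)) by rewrite mulr_ge0 //; lra.
  lra.
- rewrite ler_pM2l //.
  have : al * w <= al * 1 by rewrite ler_pM2l //; lra.
  have : AB * (w - (1 - z)) <= AB * 1 by rewrite ler_pM2l //; lra.
  lra.
Qed.

Lemma meas_g (al m z u : R) : measurable_fun setT
  (fun s : R => Fker al m z (1 - s `^ al * (1 - u)) * (1 - s) `^ (- al) * s `^ (al / m + al)).
Proof.
have mw : measurable_fun setT (fun s : R => 1 - s `^ al * (1 - u)).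
  apply: measurable_funB; first exact: measurable_cst.
  apply: measurable_funM; [exact: measurable_powR | exact: measurable_cst].
have mF : measurable_fun setT (Fker al m z).
  rewrite /Fker /=.
  apply: measurable_funM; first exact: measurable_cst.
  apply: measurable_funD; apply: measurable_funM; try exact: measurable_cst.
  + apply: measurable_funB; [exact: measurable_cst | exact: measurable_id].
  + apply: measurable_funB; [exact: measurable_cst | exact: measurable_id].
apply: measurable_funM; last exact: measurable_powR.
apply: measurable_funM.
  exact: measurableT_comp mF mw.
apply: measurableT_comp (measurable_powR _) _.
apply: measurable_funB; [exact: measurable_cst | exact: measurable_id].
Qed.

Lemma K_int (al m X z u : R) : 0 < al -> al < 1 -> 1 < m -> 0 < X -> X < 1 ->
  0 <= u -> u <= z -> z <= X ->
  ((((m + 1) * al * (1 - X) * ((1 - X) `^ (1 / al)) `^ (al / m + al)) *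
     (1 - ((1 - z) / (1 - u)) `^ (1 / al)) `^ (1 - al))%R%:E <=
   \int[mu]_(s in `[(((1 - z) / (1 - u)) `^ (1 / al))%R, 1%R])
     ((Fker al m z (1 - s `^ al * (1 - u)) * (1 - s) `^ (- al) * s `^ (al / m + al))%R)%:E)%E /\
  (\int[mu]_(s in `[(((1 - z) / (1 - u)) `^ (1 / al))%R, 1%R])
     ((Fker al m z (1 - s `^ al * (1 - u)) * (1 - s) `^ (- al) * s `^ (al / m + al))%R)%:E <=
   (((m + 1) * (al + (1 - (m - 1) / m * al + al))) *
     ((1 - al)^-1 * (1 - ((1 - z) / (1 - u)) `^ (1 / al)) `^ (1 - al)))%R%:E)%E.
Proof.
move=> a0 a1 m1 X0 X1 u0 uz zX.
have [dl dh cc0 c1] := delta_bounds a0 a1 X1 u0 uz zX.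
set c := ((1 - z) / (1 - u)) `^ (1 / al) in dl dh cc0 c1 *.
set g := fun s : R => Fker al m z (1 - s `^ al * (1 - u)) * (1 - s) `^ (- al) * s `^ (al / m + al).
set p := al / m + al.
set c0 := (1 - X) `^ (1 / al) in cc0 *.
set FL := (m + 1) * al * (1 - X).
set FH := (m + 1) * (al + (1 - (m - 1) / m * al + al)).
have c0p : 0 < c0 by apply: powR_gt0; lra.
have cp : 0 < c by apply: lt_le_trans cc0.
have p0 : 0 <= p by rewrite /p addr_ge0 ?divr_ge0 ?ltW //; lra.
have mg : measurable_fun setT g := meas_g al m z u.
have mgE : measurable_fun setT (fun s => (g s)%:E) by apply/measurable_EFinP.
have FB s : c <= s -> s <= 1 -> FL <= Fker al m z (1 - s `^ al * (1 - u)) /\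
    Fker al m z (1 - s `^ al * (1 - u)) <= FH.
  by move=> cs s1; apply: Fker_bounds.
have FL0 : 0 <= FL by rewrite /FL !mulr_ge0 //; lra.
have g0 s : c <= s -> s <= 1 -> 0 <= g s.
  move=> cs s1; have [h1 _] := FB s cs s1.
  rewrite /g; apply: mulr_ge0; [apply: mulr_ge0|]; rewrite ?powR_ge0 //; exact: le_trans FL0 h1.
have sp1 s : 0 <= s -> s <= 1 -> s `^ p <= 1.
  move=> s0 s1; have := @ge0_ler_powR R p p0 s 1; rewrite !nnegrE powR1 => -> //.
have g_hi s : c <= s -> s <= 1 -> g s <= FH * (1 - s) `^ (- al).
  move=> cs s1; have [h1 h2] := FB s cs s1.
  have s0 : 0 <= s by apply: le_trans (ltW cp) cs.
  rewrite /g -[leRHS]mulr1; apply: ler_pM; rewrite ?powR_ge0 ?sp1 //.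
  - by rewrite mulr_ge0 ?powR_ge0 //; exact: le_trans FL0 h1.
  - by apply: ler_pM; rewrite ?powR_ge0 //; exact: le_trans FL0 h1.
have FH0 : 0 <= FH.
  have [_ h2] := FB 1 c1 (lexx _); apply: le_trans h2; apply: le_trans FL0 _.
  by have [h1 _] := FB 1 c1 (lexx _).
clearbody c.
have [ceq1|clt1] := eqVneq c 1.
  by rewrite ceq1 set_itv1 integral_set1 subrr powR0 ?mulr0 ?subr_eq0 ?gt_eqF.
have {}clt1 : c < 1 by rewrite lt_neqAle clt1 c1.
have dpos : 0 < 1 - c by rewrite subr_gt0.
split.
- set K := FL * (1 - c) `^ (- al) * c0 `^ p.
  have K0 : 0 <= K.
    by rewrite /K; apply: mulr_ge0; [apply: mulr_ge0|]; rewrite ?powR_ge0.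
  apply: (@le_trans _ _ (\int[mu]_(s in `[c, 1%R[) (g s)%:E)%E); last first.
    apply: ge0_subset_integral => //.
    - exact: measurable_funTS.
    - by move=> s /=; rewrite in_itv /= => /andP[cs s1]; rewrite lee_fin g0.
    - by move=> s /=; rewrite !in_itv /= => /andP[-> /ltW].
  apply: (@le_trans _ _ (\int[mu]_(s in `[c, 1%R[) (cst K%:E) s)%E).
    rewrite integral_cst //.
    have H := @lebesgue_measure_itv R `[c, 1%R[.
    rewrite /= lte_fin clt1 in H.
    set mm := (X in (_ * X)%E).
    have -> : mm = (1 - c)%:E by exact: H.
    rewrite -EFinM lee_fin /K.
    have -> : (1 - c) `^ (1 - al) = (1 - c) `^ (- al) * (1 - c).
      rewrite -{3}(powRr1 (ltW dpos)) -powRD; first by congr (_ `^ _); ring.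
      by apply/implyP => _; rewrite gt_eqF.
    suff -> : FL * c0 `^ p * ((1 - c) `^ (- al) * (1 - c)) =
      FL * (1 - c) `^ (- al) * c0 `^ p * (1 - c) by [].
    ring.
  apply: ge0_le_integral => //.
  - exact: measurable_funTS.
  - move=> s /=; rewrite in_itv /= => /andP[cs s1]; rewrite lee_fin /K /g.
    have [h1 _] := FB s cs (ltW s1).
    have s0 : 0 < s by apply: lt_le_trans cs.
    apply: ler_pM.
    + by apply: mulr_ge0; rewrite ?powR_ge0.
    + exact: powR_ge0.
    + apply: ler_pM; rewrite ?powR_ge0 //.
      rewrite !powRN lef_pV2 ?posrE ?powR_gt0 ?subr_gt0 //.
      by apply: (ge0_ler_powR (ltW a0)); rewrite ?nnegrE; lra.
    + by apply: (ge0_ler_powR p0); rewrite ?nnegrE; lra.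
- apply: (@le_trans _ _ (\int[mu]_(s in `[c, 1%R]) (FH%:E * ((1 - s) `^ (- al))%:E))%E).
    apply: ge0_le_integral => //.
    + by move=> s /=; rewrite in_itv /= => /andP[cs s1]; rewrite lee_fin g0.
    + exact: measurable_funTS.
    + apply: measurable_funTS; apply/measurable_EFinP.
      apply: measurable_funM; first exact: measurable_cst.
      apply: measurableT_comp (measurable_powR _) _.
      by apply: measurable_funB; [exact: measurable_cst | exact: measurable_id].
    + move=> s /=; rewrite in_itv /= => /andP[cs s1].
      by rewrite -EFinM lee_fin g_hi.
  rewrite ge0_integralZl_EFin //; last first.
  + apply: measurable_funTS; apply/measurable_EFinP.
    apply: measurableT_comp (measurable_powR _) _.
    by apply: measurable_funB; [exact: measurable_cst | exact: measurable_id].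
  + by move=> s _; rewrite lee_fin powR_ge0.
  rewrite (EFinM FH); apply: lee_wpmul2l; first by rewrite lee_fin.
  exact: sing1.
Qed.

Lemma fine_bnd (x : \bar R) (a b : R) : (a%:E <= x)%E -> (x <= b%:E)%E -> a <= fine x <= b.
Proof.
case: x => [r| |] //=; rewrite ?lee_fin.
by move=> -> ->.
Qed.
End S.

Unset Implicit Arguments.
Theorem mainTheorem2 (R : realType) (al m X : R) :
  0 < al -> al < 1 -> 1 < m -> 0 < X -> X < 1 ->
  exists Km Kp : R, 0 < Km /\ Km <= Kp /\
    (forall z u : R, 0 <= u -> u <= z -> z <= X ->
       Km * (z - u) `^ (1 - al) <= Kker al m z u /\
       Kker al m z u <= Kp * (z - u) `^ (1 - al)).
Proof.
move=> a0 a1 m1 X0 X1.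
have [gl gh] := gamma_int_bounds a0 a1.
have /andP[Gl Gh] := fine_bnd gl gh.
set G := fine _ in Gl Gh.
have GE : GammaR (1 - al) = G by [].
set Gm := (1 - al)^-1 + 1 in Gh.
have e0 : 0 < expR (-1) := expR_gt0 _.
have G0 : 0 < G by apply: lt_le_trans Gl.
set Lo := (m + 1) * al * (1 - X) * ((1 - X) `^ (1 / al)) `^ (al / m + al).
set Hi := (m + 1) * (al + (1 - (m - 1) / m * al + al)).
set Q := (al * (1 - X))^-1.
have Lo0 : 0 < Lo.
  rewrite /Lo; apply: mulr_gt0; last by apply: powR_gt0; apply: powR_gt0; lra.
  by rewrite !mulr_gt0 //; lra.
have Gm0 : 0 < Gm.
  have : 0 < (1 - al)^-1 by rewrite invr_gt0; lra.
  rewrite /Gm; lra.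
have Hi0 : 0 <= Hi.
  rewrite /Hi mulr_ge0 //; first lra.
  have : (m - 1) / m * al <= al.
    rewrite -[leRHS]mul1r; apply: ler_wpM2r; first exact: ltW.
    by rewrite ler_pdivrMr ?mul1r; lra.
  lra.
have ia0 : 0 < (1 - al)^-1 by rewrite invr_gt0; lra.
set Kp0 := (expR (-1))^-1 * (Hi * ((1 - al)^-1 * Q `^ (1 - al))).
have Kp00 : 0 <= Kp0.
  rewrite /Kp0; apply: mulr_ge0; first by rewrite invr_ge0 ltW.
  apply: mulr_ge0 => //; apply: mulr_ge0; [exact: ltW | exact: powR_ge0].
exists (Lo / Gm), (Lo / Gm + Kp0); split; [|split].
- by rewrite divr_gt0.
- by rewrite lerDl.
move=> z u u0 uz zX.
have [kl kh] := K_int a0 a1 m1 X0 X1 u0 uz zX.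
have /andP[Jl Jh] := fine_bnd kl kh.
have [dl dh cc0 c1] := delta_bounds a0 a1 X1 u0 uz zX.
rewrite /Kker /Rintegral GE.
set J := fine _ in Jl Jh *.
set d := 1 - ((1 - z) / (1 - u)) `^ (1 / al) in dl dh Jl Jh.
set P := (z - u) `^ (1 - al).
have P0 : 0 <= P by apply: powR_ge0.
have a10 : 0 <= 1 - al by lra.
have hD1 : P <= d `^ (1 - al).
  by apply: (ge0_ler_powR a10); rewrite ?nnegrE; lra.
have hD2 : d `^ (1 - al) <= Q `^ (1 - al) * P.
  have Q0 : 0 <= Q by rewrite /Q invr_ge0 mulr_ge0 //; lra.
  have zu0 : 0 <= z - u by lra.
  rewrite /P mulrC -powRM //.
  apply: (ge0_ler_powR a10); rewrite ?nnegrE; [lra | by rewrite mulr_ge0 | exact: dh].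
have J0 : 0 <= J.
  apply: le_trans Jl; rewrite mulr_ge0 ?powR_ge0 //; exact: ltW.
split.
- have -> : Lo / Gm * P = Gm^-1 * (Lo * P) by ring.
  apply: ler_pM.
  + by rewrite invr_ge0 ltW.
  + by rewrite mulr_ge0 // ltW.
  + by rewrite lef_pV2 ?posrE.
  + by apply: (le_trans _ Jl); rewrite ler_pM2l.
- rewrite mulrDl; apply: (@le_trans _ _ (Kp0 * P)); last first.
    by rewrite lerDr mulr_ge0 // divr_ge0 ?ltW.
  have -> : Kp0 * P = (expR (-1))^-1 * (Hi * ((1 - al)^-1 * (Q `^ (1 - al) * P))).
    by rewrite /Kp0; ring.
  apply: ler_pM.
  + by rewrite invr_ge0 ltW.
  + exact: J0.
  + by rewrite lef_pV2 ?posrE.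
  + apply: (le_trans Jh); apply: ler_wpM2l => //.
    apply: ler_wpM2l; [exact: ltW | exact: hD2].
Qed.
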